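(* Let $\alpha$ be a complex number with $0<|\alpha|<1$ and let $\alpha_n=\alpha$ for all $n\ge0$ (Geronimus polynomials). Then, for every nonnegative integer $m$, as formal power series in $z$, \[ \sum_{n\ge0}\mu_{n,m}z^n=\frac{2|\alpha|^2(2z)^m}{\left(2|\alpha|^2+\alpha-\alpha z-\alpha\sqrt{1-2z+4|\alpha|^2z+z^2}\right)\left(1+z+\sqrt{1-2z+4|\alpha|^2z+z^2}\right)^m}, \] where the square root is the formal power series with constant term $1$.
   Context: For a polynomial $f(z)=\sum_{k=0}^n a_kz^k$ of degree $n$, write $\overline{f}(z)=\sum_k\overline{a_k}z^k$ and $f^*(z)=z^n\overline{f}(1/z)$. Given $(\alpha_n)$ with $|\alpha_n|<1$, define monic $\Phi_n$ by $\Phi_0=1$, $\Phi_{n+1}(z)=z\Phi_n(z)-\overline{\alpha_n}\Phi_n^*(z)$. Let $\mathcal{L}$ be the unique linear functional on Laurent polynomials with $\mathcal{L}(1)=1$ and $\mathcal{L}(\Phi_m(z)\overline{\Phi_n}(1/z))=0$ for $m\neq n$; set $\langle f,g\rangle=\mathcal{L}(f(z)\overline{g}(1/z))$ and $\mu_{n,m}=\langle\Phi_m(z),z^n\rangle/\langle\Phi_m,\Phi_m\rangle$. *)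

(* Defs.v *)
From HB Require Import structures.
From mathcomp Require Import all_boot all_order all_algebra.
From mathcomp Require Import complex.
From mathcomp Require Import reals.
Set Implicit Arguments. Unset Strict Implicit. Unset Printing Implicit Defensive.
Import Order.TTheory GRing.Theory Num.Theory.
Local Open Scope ring_scope.

Section OPUC.
Variable C : numClosedFieldType.

(* f^*(z) = z^n \bar f(1/z) for a polynomial of degree n:
   coefficient i of f^* is conj(f_(n-i)). *)
Definition pstar (n : nat) (f : {poly C}) : {poly C} :=
  \poly_(i < n.+1) (f`_(n - i))^*.

Fixpoint Phi (alpha : nat -> C) (n : nat) : {poly C} :=
  match n with
  | 0 => 1
  | n'.+1 => 'X * Phi alpha n' - (alpha n')^* *: pstar n' (Phi alpha n')
  end.

(* A linear functional L on Laurent polynomials is given by its moments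
   c k = L(z^k), k : int.  Then <f,g> = L(f(z) \bar g(1/z))
   = sum_{i,j} f_i conj(g_j) c(i - j). *)
Definition lip (c : int -> C) (f g : {poly C}) : C :=
  \sum_(i < size f) \sum_(j < size g) f`_i * (g`_j)^* * c (i%:Z - j%:Z).

Definition is_OPUC_functional (alpha : nat -> C) (c : int -> C) : Prop :=
  c 0 = 1 /\ forall m n : nat, m <> n -> lip c (Phi alpha m) (Phi alpha n) = 0.

Definition mu (alpha : nat -> C) (c : int -> C) (n m : nat) : C :=
  lip c (Phi alpha m) 'X^n / lip c (Phi alpha m) (Phi alpha m).

Definition fps := nat -> C.
Definition fps_const (a : C) : fps := fun n => if n is 0 then a else 0.
Definition fps_X : fps := fun n => if n == 1%N then 1 else 0.
Definition fps_add (f g : fps) : fps := fun n => f n + g n.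
Definition fps_opp (f : fps) : fps := fun n => - f n.
Definition fps_scale (a : C) (f : fps) : fps := fun n => a * f n.
Definition fps_mul (f g : fps) : fps :=
  fun n => \sum_(i < n.+1) f i * g (n - i)%N.
Fixpoint fps_exp (f : fps) (k : nat) : fps :=
  match k with 0 => fps_const 1 | k'.+1 => fps_mul f (fps_exp f k') end.

End OPUC.

(* Main.v *)
Require Import Defs.
From HB Require Import structures.
From mathcomp Require Import all_boot all_order all_algebra.
From mathcomp Require Import complex.
From mathcomp Require Import reals.
From mathcomp Require Import boolp ring zify.
Import Order.TTheory GRing.Theory Num.Theory.
Local Open Scope ring_scope.

Set Implicit Arguments. Unset Strict Implicit. Unset Printing Implicit Defensive.


Section FPS.
Variable C : numClosedFieldType.

Record F := FPS { fc : nat -> C }.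
HB.instance Definition _ := gen_eqMixin F.
HB.instance Definition _ := gen_choiceMixin F.

Lemma F_ext (f g : F) : (forall n, fc f n = fc g n) -> f = g.
Proof. case: f; case: g => g f /= H; congr FPS; exact: functional_extensionality_dep. Qed.

Definition tr (N : nat) (f : nat -> C) : {poly C} := \poly_(i < N) f i.

Lemma fps_mul_tr (f g : nat -> C) n N : (n < N)%N ->
  fps_mul f g n = (tr N f * tr N g)`_n.
Proof.
move=> nN; rewrite coefM /fps_mul; apply: eq_bigr => i _.
rewrite /tr !coef_poly (leq_ltn_trans _ nN) ?leq_ord //.
by rewrite (leq_ltn_trans _ nN) ?leq_subr.
Qed.

Lemma coefM_ext (p q p' q' : {poly C}) n :
  (forall i, (i <= n)%N -> p`_i = p'`_i) -> (forall i, (i <= n)%N -> q`_i = q'`_i) ->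
  (p * q)`_n = (p' * q')`_n.
Proof.
move=> Hp Hq; rewrite !coefM; apply: eq_bigr => i _.
by rewrite Hp ?Hq ?leq_subr // -ltnS.
Qed.

Lemma tr_mul (f g : nat -> C) N i : (i < N)%N ->
  (tr N (fps_mul f g))`_i = (tr N f * tr N g)`_i.
Proof. by move=> iN; rewrite /tr coef_poly iN (fps_mul_tr _ _ iN). Qed.

Lemma fps_mulC f g : fps_mul f g = fps_mul g f :> (nat -> C).
Proof.
apply: functional_extensionality_dep => n.
by rewrite !(fps_mul_tr _ _ (ltnSn n)) mulrC.
Qed.

Lemma fps_mulA f g h : fps_mul f (fps_mul g h) = fps_mul (fps_mul f g) h :> (nat -> C).
Proof.
apply: functional_extensionality_dep => n.
rewrite !(fps_mul_tr _ _ (ltnSn n)).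
rewrite (@coefM_ext _ _ (tr n.+1 f) (tr n.+1 g * tr n.+1 h)) //; last first.
  by move=> i ilen; rewrite tr_mul.
rewrite [RHS](@coefM_ext _ _ (tr n.+1 f * tr n.+1 g) (tr n.+1 h)) //; last first.
  by move=> i ilen; rewrite tr_mul.
by rewrite mulrA.
Qed.

Lemma fps_mul1 f : fps_mul (fps_const 1) f = f :> (nat -> C).
Proof.
apply: functional_extensionality_dep => n.
rewrite /fps_mul big_ord_recl /= mul1r subn0 big1 ?addr0 // => i _.
by rewrite mul0r.
Qed.

Lemma fps_mulDl f g h : fps_mul (fps_add f g) h = fps_add (fps_mul f h) (fps_mul g h) :> (nat -> C).
Proof.
apply: functional_extensionality_dep => n.
by rewrite /fps_mul /fps_add -big_split; apply: eq_bigr => i _; rewrite mulrDl.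
Qed.

Definition Fadd f g := FPS (fps_add (fc f) (fc g)).
Definition Fopp f := FPS (fps_opp (fc f)).
Definition F0 := FPS (fps_const 0).
Definition F1 := FPS (fps_const 1).
Definition Fmul f g := FPS (fps_mul (fc f) (fc g)).

Lemma FaddA : associative Fadd.
Proof. by move=> f g h; apply: F_ext => n; rewrite /= /fps_add addrA. Qed.
Lemma FaddC : commutative Fadd.
Proof. by move=> f g; apply: F_ext => n; rewrite /= /fps_add addrC. Qed.
Lemma Fadd0 : left_id F0 Fadd.
Proof. by move=> f; apply: F_ext => -[|n]; rewrite /= /fps_add add0r. Qed.
Lemma FaddN : left_inverse F0 Fopp Fadd.
Proof. by move=> f; apply: F_ext => -[|n]; rewrite /= /fps_add /fps_opp addNr. Qed.

HB.instance Definition _ := GRing.isZmodule.Build F FaddA FaddC Fadd0 FaddN.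

Lemma FmulA : associative Fmul.
Proof. by move=> f g h; apply: F_ext => n; rewrite /= fps_mulA. Qed.
Lemma FmulC : commutative Fmul.
Proof. by move=> f g; apply: F_ext => n; rewrite /= fps_mulC. Qed.
Lemma Fmul1 : left_id F1 Fmul.
Proof. by move=> f; apply: F_ext => n; rewrite /= fps_mul1. Qed.
Lemma FmulDl : left_distributive Fmul Fadd.
Proof. by move=> f g h; apply: F_ext => n; rewrite /= fps_mulDl. Qed.
Lemma F1_neq0 : F1 != F0.
Proof. apply/eqP => /(congr1 (fun f => fc f 0%N)) /= /eqP; by rewrite oner_eq0. Qed.

HB.instance Definition _ := GRing.Zmodule_isComNzRing.Build F FmulA FmulC Fmul1 FmulDl F1_neq0.

Lemma fcD f g n : fc (f + g) n = fc f n + fc g n. Proof. by []. Qed.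
Lemma fcN f n : fc (- f) n = - fc f n. Proof. by []. Qed.
Lemma fcB f g n : fc (f - g) n = fc f n - fc g n. Proof. by []. Qed.
Lemma fcM f g n : fc (f * g) n = \sum_(i < n.+1) fc f i * fc g (n - i)%N. Proof. by []. Qed.
Lemma fc0 n : fc 0 n = 0. Proof. by case: n. Qed.
Lemma fc1 n : fc 1 n = if n is 0 then 1 else 0. Proof. by []. Qed.


Definition cst (a : C) : F := FPS (fps_const a).
Definition Xf : F := FPS (@fps_X C).

Lemma cstD a b : cst (a + b) = cst a + cst b.
Proof. by apply: F_ext => -[|n] //=; rewrite /fps_add /= addr0. Qed.
Lemma cstN a : cst (- a) = - cst a.
Proof. by apply: F_ext => -[|n] //=; rewrite /fps_opp /= oppr0. Qed.
Lemma cstB a b : cst (a - b) = cst a - cst b.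
Proof. by rewrite cstD cstN. Qed.
Lemma cst1 : cst 1 = 1. Proof. by []. Qed.
Lemma cst0 : cst 0 = 0. Proof. by []. Qed.
Lemma fc_cstM a f n : fc (cst a * f) n = a * fc f n.
Proof.
rewrite fcM big_ord_recl /= subn0 big1 ?addr0 // => i _.
by rewrite mul0r.
Qed.
Lemma cstM a b : cst (a * b) = cst a * cst b.
Proof. by apply: F_ext => n; rewrite fc_cstM; case: n => //= n; rewrite mulr0. Qed.
Lemma cstn n : cst n%:R = n%:R.
Proof. elim: n => // n IH; by rewrite -addn1 !natrD cstD IH cst1. Qed.

Lemma fc_XM f n : fc (Xf * f) n = if n is n'.+1 then fc f n' else 0.
Proof.
rewrite fcM; case: n => [|n].
  by rewrite big_ord1 /= mul0r.
rewrite big_ord_recl /= mul0r add0r big_ord_recl /= subSS subn0 mul1r big1 ?addr0 // => i _.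
by rewrite /fps_X /=; rewrite mul0r.
Qed.

Lemma fcM0 f g : fc (f * g) 0 = fc f 0 * fc g 0.
Proof. by rewrite fcM big_ord1. Qed.

Lemma fcX0 f m : fc (f ^+ m) 0 = fc f 0 ^+ m.
Proof. elim: m => [|m IH]; first by rewrite !expr0. by rewrite !exprS fcM0 IH. Qed.

Definition ordge (f : F) k := forall i, (i < k)%N -> fc f i = 0.

Lemma ordge0 k : ordge 0 k. Proof. by move=> i _; rewrite fc0. Qed.
Lemma ordgeD f g k : ordge f k -> ordge g k -> ordge (f + g) k.
Proof. by move=> Hf Hg i ik; rewrite fcD Hf ?Hg ?addr0. Qed.
Lemma ordgeN f k : ordge f k -> ordge (- f) k.
Proof. by move=> Hf i ik; rewrite fcN Hf ?oppr0. Qed.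
Lemma ordgeB f g k : ordge f k -> ordge g k -> ordge (f - g) k.
Proof. by move=> Hf Hg; apply: ordgeD => //; apply: ordgeN. Qed.
Lemma ordge_le f k k' : (k' <= k)%N -> ordge f k -> ordge f k'.
Proof. by move=> kk Hf i ik; apply: Hf; apply: leq_trans kk. Qed.

Lemma fcM_ordge f g k : ordge f k -> fc (f * g) k = fc f k * fc g 0.
Proof.
move=> Hf; rewrite fcM big_ord_recr /= subnn big1 ?add0r // => i _.
by rewrite Hf ?mul0r.
Qed.

Lemma ordgeMr f g k : ordge f k -> ordge (f * g) k.
Proof.
move=> Hf i ik; rewrite fcM big1 // => j _; rewrite Hf ?mul0r //.
by apply: leq_ltn_trans ik; rewrite -ltnS.
Qed.
Lemma ordgeMl f g k : ordge g k -> ordge (f * g) k.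
Proof. by rewrite mulrC; apply: ordgeMr. Qed.

Lemma ordgeX f k : ordge f k -> ordge (Xf * f) k.+1.
Proof. by move=> Hf [|i] ik; rewrite fc_XM // Hf. Qed.

Lemma ordge_cancel f g k : ordge (f * g) k -> fc g 0 != 0 -> ordge f k.
Proof.
move=> H g0; elim: k H => [|k IH] H; first by [].
have Hk : ordge f k by apply: IH => i ik; apply: H; apply: ltnW.
move=> i; rewrite ltnS leq_eqVlt => /orP [/eqP ->|]; last exact: Hk.
have := H k (ltnSn k); rewrite fcM_ordge // => /eqP; rewrite mulf_eq0 (negbTE g0) orbF.
by move/eqP.
Qed.

Lemma ordge_all f : (forall k, ordge f k) -> f = 0.
Proof. by move=> H; apply: F_ext => n; rewrite fc0; apply: (H n.+1). Qed.


Lemma two_neq0 : (2 : C) != 0.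
Proof. by rewrite pnatr_eq0. Qed.

Lemma uniq_lemma (D2 D3 : F) (p q : C) (dX dZ : nat -> F) :
  fc D2 0 = 2 -> fc D3 0 = 2 ->
  (forall m, dX m.+1 * D3 = Xf * D2 * D3 * dX m - cst p * D2 * dZ m) ->
  (forall m, dZ m.+1 = D2 * dZ m - cst q * Xf * D2 * D3 * dX m) ->
  dZ 0%N = dX 0%N * D3 ->
  (forall m, ordge (dZ m) m.+1) ->
  forall m, dX m = 0.
Proof.
move=> D20 D30 R1 R2 I Co.
have D3n : fc D3 0 != 0 by rewrite D30 two_neq0.
have H0 : forall k, ordge (dX 0%N) k.
  elim=> [|k IHk]; first by [].
  have Hm : forall m, [/\ ordge (dX m) k, ordge (dZ m) k &
                        fc (dZ m) k = 2 ^+ m.+1 * fc (dX 0%N) k].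
    elim=> [|m [HXm HZm EZm]].
      by rewrite I; split => //; [apply: ordgeMr | rewrite fcM_ordge // D30 mulrC expr1].
    have HXm1 : ordge (dX m.+1) k.
      apply: (@ordge_cancel _ D3) => //; rewrite R1; apply: ordgeB; exact: ordgeMl.
    have E : cst q * Xf * D2 * D3 * dX m = Xf * (cst q * D2 * D3 * dX m).
      by rewrite !mulrA [cst q * Xf]mulrC.
    split => //.
      rewrite R2 E; apply: ordgeB; first exact: ordgeMl.
      apply: (@ordge_le _ k.+1) => //; apply: ordgeX; exact: ordgeMl.
    rewrite R2 E fcB [D2 * _]mulrC (fcM_ordge _ HZm) EZm D20.
    rewrite (ordgeX (ordgeMl _ HXm)) // subr0 (exprS _ m.+1); ring.
  move=> i; rewrite ltnS leq_eqVlt => /orP [/eqP ->|]; last exact: IHk.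
  have [_ _ E] := Hm k.
  have := Co k k (ltnSn k); rewrite E => /eqP; rewrite mulf_eq0 expf_eq0 (negbTE two_neq0) andbF /=.
  by move/eqP.
have X0 : dX 0%N = 0 by apply: ordge_all.
have Z0 : dZ 0%N = 0 by rewrite I X0 mul0r.
suff : forall m, dX m = 0 /\ dZ m = 0 by move=> H m; case: (H m).
elim=> [|m [Xm Zm]]; first by [].
have Zm1 : dZ m.+1 = 0 by rewrite R2 Xm Zm !mulr0 subr0.
split => //; apply: ordge_all => k; apply: (@ordge_cancel _ D3) => //.
by rewrite R1 Xm Zm !mulr0 subr0; apply: ordge0.
Qed.



Lemma ordge_Xn g n : ordge (Xf ^+ n * g) n.
Proof.
elim: n g => [|n IH] g; first by [].
by rewrite exprS -mulrA; apply: ordgeX; apply: IH.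
Qed.

Lemma fc_Xn g n : fc (Xf ^+ n * g) n = fc g 0.
Proof.
elim: n g => [|n IH] g; first by rewrite expr0 mul1r.
by rewrite exprS -mulrA fc_XM IH.
Qed.

Lemma ringS (S Q T x y : F) : x - y = T * (S * S - Q) -> S * S = Q -> x = y.
Proof. by move=> E HS; apply/eqP; rewrite -subr_eq0 E HS subrr mulr0. Qed.

Section MainAlg.
Variables (a b k rho : C) (S : F) (U V : nat -> F).
Hypothesis Hk : k = a * b.
Hypothesis Hrho : rho = 1 - k.
Hypothesis HS : S * S = 1 + cst (-2 + 4 * k) * Xf + Xf * Xf.
Hypothesis HU : forall m, U m.+1 = Xf * U m - cst b * (V m - cst (rho ^+ m)).
Hypothesis HV : forall m, V m.+1 - cst (rho ^+ m.+1) = V m - cst (rho ^+ m) - cst a * Xf * U m.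
Hypothesis H0 : U 0%N = V 0%N.
Hypothesis HUo : forall m, ordge (V m - cst (rho ^+ m)) m.+1.
Hypothesis HS0 : fc S 0 = 1.

Let D1 := cst (2 * k + a) + (cst (- a) * Xf + cst (- a) * S).
Let D2 := 1 + (Xf + S).
Let D3 := D2 - cst (2 * rho) * Xf.

Let W m := V m - cst (rho ^+ m).
Let Xa m := U m * D1 * D2 ^+ m.
Let Za m := W m * D1 * D2 ^+ m * D3.
Let Xr m := cst (rho ^+ m * (2 * k)) * (cst 2 * Xf) ^+ m.
Let Zr m := cst (rho ^+ m * (2 * k) * a) * Xf * (cst 2 * Xf) ^+ m * D2.

Lemma main_alg m : Xa m = Xr m.
Proof.
have cst2 : cst 2 = 2 by rewrite (cstn 2).
have cst4 : cst 4 = 4 by rewrite (cstn 4).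
have D20 : fc D2 0 = 2 by rewrite /D2 !fcD HS0 /= add0r.
have D30 : fc D3 0 = 2.
  by rewrite /D3 fcB D20 fcM0 /= mulr0 subr0.
have R1a m' : Xa m'.+1 * D3 = Xf * D2 * D3 * Xa m' - cst b * D2 * Za m'.
  by rewrite /Xa /Za /W HU exprS; ring.
have R2a m' : Za m'.+1 = D2 * Za m' - cst a * Xf * D2 * D3 * Xa m'.
  by rewrite /Za /Xa /W HV exprS; ring.
have R1r m' : Xr m'.+1 * D3 = Xf * D2 * D3 * Xr m' - cst b * D2 * Zr m'.
  rewrite /Xr /Zr /D3 /D2 [rho ^+ m'.+1]exprS [(_ * Xf) ^+ m'.+1]exprS !cstM.
  set P := cst (rho ^+ m'); set Y := (cst 2 * Xf) ^+ m'.
  rewrite cst2 Hrho cstB cst1 Hk cstM.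
  apply: (@ringS S (1 + cst (-2 + 4 * (a * b)) * Xf + Xf * Xf)
     (- P * Y * Xf * 2 * (cst a * cst b) * (1 - cst a * cst b))); last by rewrite -Hk.
  rewrite cstD cstN cst2 cstM cst4 cstM; ring.
have R2r m' : Zr m'.+1 = D2 * Zr m' - cst a * Xf * D2 * D3 * Xr m'.
  rewrite /Xr /Zr /D3 [rho ^+ m'.+1]exprS [(_ * Xf) ^+ m'.+1]exprS !cstM.
  set P := cst (rho ^+ m'); set Y := (cst 2 * Xf) ^+ m'.
  rewrite cst2; ring.
have Ir : Zr 0%N = Xr 0%N * D3 - D1 * D3.
  rewrite /Xr /Zr /D3 /D1 /D2 !expr0 !mul1r !mulr1 !cstM !cstD !cstN !cstM cst2 Hrho cstB cst1 Hk cstM.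
  apply: (@ringS S (1 + cst (-2 + 4 * (a * b)) * Xf + Xf * Xf) (- cst a)); last by rewrite -Hk.
  rewrite cstD cstN cst2 cstM cst4 cstM; ring.
have R1 m' : (Xa m'.+1 - Xr m'.+1) * D3 = Xf * D2 * D3 * (Xa m' - Xr m') - cst b * D2 * (Za m' - Zr m').
  by rewrite mulrBl R1a R1r; ring.
have R2 m' : Za m'.+1 - Zr m'.+1 = D2 * (Za m' - Zr m') - cst a * Xf * D2 * D3 * (Xa m' - Xr m').
  by rewrite R2a R2r; ring.
have I : Za 0%N - Zr 0%N = (Xa 0%N - Xr 0%N) * D3.
  have -> : Za 0%N = Xa 0%N * D3 - D1 * D3.
    by rewrite /Za /Xa /W -H0 !expr0 cst1; ring.
  rewrite Ir; ring.
have Co m' : ordge (Za m' - Zr m') m'.+1.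
  apply: ordgeB; first by rewrite /Za -!mulrA; apply: ordgeMr; apply: HUo.
  have -> : Zr m' = Xf ^+ m'.+1 * (cst (rho ^+ m' * (2 * k) * a) * cst 2 ^+ m' * D2).
    by rewrite /Zr exprMn exprS; ring.
  exact: ordge_Xn.
have := @uniq_lemma D2 D3 b a (fun m => Xa m - Xr m) (fun m => Za m - Zr m) D20 D30 R1 R2 I Co m.
by move/eqP; rewrite subr_eq0 => /eqP.
Qed.

End MainAlg.

End FPS.
Arguments Xf {C}.



Section OP.
Variables (C : numClosedFieldType) (a : C) (c : int -> C).
Hypothesis Hc : is_OPUC_functional (fun _ => a) c.

Let P m := Phi (fun _ => a) m.
Let Ps m := pstar m (P m).
Definition w (f : {poly C}) (n : int) := \sum_(i < size f) f`_i * c (i%:Z - n).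
Definition r (g : {poly C}) (i : int) := \sum_(j < size g) (g`_j)^* * c (i - j%:Z).

Lemma sum_size (p : {poly C}) N (G : nat -> C -> C) : (size p <= N)%N ->
  (forall i, G i 0 = 0) -> \sum_(i < size p) G i p`_i = \sum_(i < N) G i p`_i.
Proof.
move=> HN G0; rewrite (big_ord_widen _ (fun i => G i p`_i) HN) big_mkcond.
apply: eq_bigr => i _; case: ifP => // /negbT; rewrite -leqNgt => Hi.
by rewrite nth_default // G0.
Qed.

Lemma lip_w (f g : {poly C}) : lip c f g = \sum_(j < size g) (g`_j)^* * w f j.
Proof.
rewrite /lip exchange_big; apply: eq_bigr => j _; rewrite /w mulr_sumr.
by apply: eq_bigr => i _; ring.
Qed.

Lemma lip_r (f g : {poly C}) : lip c f g = \sum_(i < size f) f`_i * r g i.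
Proof.
rewrite /lip; apply: eq_bigr => i _; rewrite /r mulr_sumr.
by apply: eq_bigr => j _; ring.
Qed.

Lemma lip_wN N (f g : {poly C}) : (size g <= N)%N -> lip c f g = \sum_(j < N) (g`_j)^* * w f j.
Proof.
move=> HN; rewrite lip_w (@sum_size g N (fun j x => x^* * w f j) HN) //.
by move=> i; rewrite conjC0 mul0r.
Qed.

Lemma lip_rN N (f g : {poly C}) : (size f <= N)%N -> lip c f g = \sum_(i < N) f`_i * r g i.
Proof.
move=> HN; rewrite lip_r (@sum_size f N (fun j x => x * r g j) HN) //.
by move=> i; rewrite mul0r.
Qed.

Lemma w_N N (f : {poly C}) n : (size f <= N)%N -> w f n = \sum_(i < N) f`_i * c (i%:Z - n).
Proof.
move=> HN; rewrite /w (@sum_size f N (fun i x => x * c (i%:Z - n)) HN) //.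
by move=> i; rewrite mul0r.
Qed.

Lemma r_N N (g : {poly C}) i : (size g <= N)%N -> r g i = \sum_(j < N) (g`_j)^* * c (i - j%:Z).
Proof.
move=> HN; rewrite /r (@sum_size g N (fun j x => x^* * c (i - j%:Z)) HN) //.
by move=> j; rewrite conjC0 mul0r.
Qed.

Lemma w_add (f g : {poly C}) n : w (f + g) n = w f n + w g n.
Proof.
set N := maxn (size f) (size g).
rewrite !(@w_N N) ?leq_maxl ?leq_maxr ?size_polyD // -big_split.
by apply: eq_bigr => i _; rewrite coefD mulrDl.
Qed.

Lemma w_scale k (f : {poly C}) n : w (k *: f) n = k * w f n.
Proof.
rewrite !(@w_N (size f)) ?size_scale_leq // mulr_sumr.
by apply: eq_bigr => i _; rewrite coefZ mulrA.
Qed.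

Lemma w_sub (f g : {poly C}) n : w (f - g) n = w f n - w g n.
Proof.
by rewrite w_add -scaleN1r w_scale mulN1r.
Qed.

Lemma w_X (f : {poly C}) n : w ('X * f) n = w f (n - 1).
Proof.
rewrite (@w_N (size f).+1); last first.
  by apply: leq_trans (size_polyMleq _ _) _; rewrite size_polyX.
rewrite big_ord_recl coefXM /= mul0r add0r (@w_N (size f)) //.
apply: eq_bigr => i _; rewrite coefXM /=; congr (_ * c _).
by rewrite /bump /= add1n intS; ring.
Qed.

Lemma P_coef m : (P m)`_m = 1 /\ forall i, (m < i)%N -> (P m)`_i = 0.
Proof.
elim: m => [|m [IH1 IH2]].
  by split; [rewrite /P /= coef1 | move=> [|i] //= _; rewrite coef1].
have E : P m.+1 = 'X * P m - a^* *: pstar m (P m) by [].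
split.
  rewrite E coefB coefXM /= IH1 coefZ /pstar coef_poly ltnn mulr0 subr0 //.
move=> i Hi; rewrite E coefB coefXM coefZ /pstar coef_poly.
have -> : (i == 0%N) = false by case: i Hi.
by rewrite ltnNge (ltnW Hi) /= mulr0 subr0; apply: IH2; case: i Hi.
Qed.

Lemma size_P m : (size (P m) <= m.+1)%N.
Proof. by apply/leq_sizeP => j Hj; apply: (proj2 (P_coef m)). Qed.

Lemma size_Ps m : (size (Ps m) <= m.+1)%N.
Proof. exact: size_poly. Qed.

Lemma Ps_coef m i : (Ps m)`_i = if (i < m.+1)%N then ((P m)`_(m - i))^* else 0.
Proof. by rewrite /Ps /pstar coef_poly. Qed.

Lemma Ps_rec m : Ps m.+1 = Ps m - a *: ('X * P m).
Proof.
apply/polyP => i; rewrite coefB coefZ coefXM !Ps_coef.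
have E : P m.+1 = 'X * P m - a^* *: pstar m (P m) by [].
have [H1 H2] := P_coef m.
case: (ltngtP i m.+1) => Hi.
- rewrite (ltn_trans Hi (ltnSn _)) E coefB coefZ coefXM -/(Ps m) Ps_coef.
  case: i Hi => [|i] Hi.
    by rewrite !subn0 /= ltnn !mulr0 !subr0.
  rewrite subSS /=.
  have -> : ((m - i)%N == 0%N) = false by apply/negbTE; rewrite subn_eq0 -ltnNge.
  have -> : (m - i < m.+1)%N by rewrite ltnS leq_subr.
  have -> : (m - (m - i))%N = i by lia.
  have -> : (m - i).-1 = (m - i.+1)%N by lia.
  by rewrite rmorphB rmorphM /= !conjCK.
- rewrite ltnNge Hi /=.
  have -> : (i == 0%N) = false by case: i Hi.
  by rewrite H2 ?mulr0 ?subr0 //; case: i Hi.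
- rewrite Hi ltnSn subnn E coefB coefXM /= coefZ -/(Ps m) Ps_coef /= subn0 H1.
  by rewrite !sub0r rmorphN rmorph1 !mulr1 /= conjCK.
Qed.

Let u m n := w (P m) n.
Let v m n := w (Ps m) n.

Lemma u_rec m n : u m.+1 n = u m (n - 1) - a^* * v m n.
Proof.
have E : P m.+1 = 'X * P m - a^* *: pstar m (P m) by [].
by rewrite /u E w_sub w_X w_scale.
Qed.

Lemma v_rec m n : v m.+1 n = v m n - a * u m (n - 1).
Proof. by rewrite /v Ps_rec w_sub w_scale w_X. Qed.

Lemma u_orth m j : (j < m)%N -> u m j%:Z = 0.
Proof.
elim/ltn_ind: j => j IH jm.
have mj : m <> j by move=> e; rewrite e ltnn in jm.
have := (proj2 Hc) m j mj.
rewrite (@lip_wN j.+1) ?size_P // big_ord_recr /= (proj1 (P_coef j)) rmorph1 mul1r.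
rewrite big1 ?add0r // => i _.
by rewrite /u in IH; rewrite IH ?mulr0 // (ltn_trans _ jm).
Qed.

Lemma r_orth m j : (j < m)%N -> r (P m) j%:Z = 0.
Proof.
elim/ltn_ind: j => j IH jm.
have mj : j <> m by move=> e; rewrite e ltnn in jm.
have := (proj2 Hc) j m mj.
rewrite (@lip_rN j.+1) ?size_P // big_ord_recr /= (proj1 (P_coef j)) mul1r.
rewrite big1 ?add0r // => i _.
by rewrite IH ?mulr0 // (ltn_trans _ jm).
Qed.

Lemma v_orth m n : (0 < n)%N -> (n <= m)%N -> v m n%:Z = 0.
Proof.
move=> n0 nm.
rewrite -(@r_orth m (m - n)); last by lia.
rewrite /v (@w_N m.+1 _ _ (size_Ps m)) (@r_N m.+1 _ _ (size_P m)).
rewrite (reindex_inj rev_ord_inj) /=; apply: eq_bigr => i _.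
rewrite Ps_coef subSS ltnS leq_subr.
have -> : (m - (m - i))%N = i by have := ltn_ord i; lia.
congr (_ * c _); have := ltn_ord i; lia.
Qed.

Lemma Ps0 : Ps 0 = 1.
Proof.
apply/polyP => i; rewrite Ps_coef coef1; case: i => [|i] //=.
by rewrite /P /= coef1 rmorph1.
Qed.

Let rho := 1 - a * a^*.

Lemma v0 m : v m 0 = rho ^+ m.
Proof.
elim: m => [|m IH].
  by rewrite /v Ps0 /w size_poly1 big_ord1 coef1 mul1r subr0 (proj1 Hc).
have H := u_orth (ltn0Sn m); rewrite u_rec IH in H.
move/eqP: H; rewrite subr_eq0 => /eqP H.
rewrite v_rec H IH exprS /rho; ring.
Qed.

Definition Uf m := @FPS C (fun n : nat => u m n%:Z).
Definition Vf m := @FPS C (fun n : nat => v m n%:Z).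

Lemma fc_cst (x : C) n : fc (cst x) n = if n is 0 then x else 0.
Proof. by []. Qed.

Lemma HU m : Uf m.+1 = Xf * Uf m - cst a^* * (Vf m - cst (rho ^+ m)).
Proof.
apply: F_ext => n; rewrite fcB fc_XM fc_cstM fcB fc_cst /=.
case: n => [|n].
  by rewrite (u_orth (ltn0Sn m)) v0 subrr mulr0 subr0.
rewrite u_rec subr0; congr (u m _ - _); rewrite intS; ring.
Qed.

Lemma HV m : Vf m.+1 - cst (rho ^+ m.+1) = Vf m - cst (rho ^+ m) - cst a * Xf * Uf m.
Proof.
apply: F_ext => n; rewrite !fcB -mulrA fc_cstM fc_XM !fc_cst /=.
case: n => [|n].
  by rewrite !v0 !subrr mulr0 subr0.
rewrite v_rec !subr0; congr (_ - a * u m _); rewrite intS; ring.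
Qed.

Lemma H0 : Uf 0 = Vf 0.
Proof. by apply: F_ext => n; rewrite /= /v Ps0. Qed.

Lemma HVo m : ordge (Vf m - cst (rho ^+ m)) m.+1.
Proof.
move=> [|i] Hi; rewrite fcB fc_cst /=; first by rewrite v0 subrr.
by rewrite v_orth ?subr0.
Qed.

Lemma HUo m : ordge (Uf m) m.
Proof. by move=> i Hi; apply: u_orth. Qed.

Lemma mu_E m n : mu (fun _ => a) c n m = u m n / u m m.
Proof.
rewrite /mu; congr (_ / _).
  rewrite (@lip_wN n.+1) ?size_polyXn // big_ord_recr /= coefXn eqxx rmorph1 mul1r.
  by rewrite big1 ?add0r // => i _; rewrite coefXn (ltn_eqF (ltn_ord i)) rmorph0 mul0r.
rewrite (@lip_wN m.+1) ?size_P // big_ord_recr /= (proj1 (P_coef m)) rmorph1 mul1r.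
by rewrite big1 ?add0r // => i _; apply/eqP; rewrite mulf_eq0; apply/orP; right; apply/eqP; apply: u_orth.
Qed.

End OP.


Unset Implicit Arguments. Set Strict Implicit.


Section Conv.
Variable C : numClosedFieldType.
Implicit Types (f g : fps C) (x : C).

Lemma FPS_inj f g : FPS f = FPS g -> f = g.
Proof. by move=> H; have := congr1 (@fc C) H. Qed.
Lemma FPS_fc (x : F C) : FPS (fc x) = x. Proof. by case: x. Qed.
Lemma FPS_mul f g : FPS (fps_mul f g) = FPS f * FPS g. Proof. by []. Qed.
Lemma FPS_add f g : FPS (fps_add f g) = FPS f + FPS g. Proof. by []. Qed.
Lemma FPS_const x : FPS (fps_const x) = cst x. Proof. by []. Qed.
Lemma FPS_X : FPS (@fps_X C) = Xf. Proof. by []. Qed.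
Lemma FPS_scale x f : FPS (fps_scale x f) = cst x * FPS f.
Proof. by apply: F_ext => n; rewrite fc_cstM. Qed.
Lemma FPS_exp f n : FPS (fps_exp f n) = FPS f ^+ n.
Proof.
elim: n => [|n IH]; first by rewrite expr0.
by rewrite exprS /= FPS_mul IH.
Qed.
Lemma cstX x n : cst (x ^+ n) = cst x ^+ n.
Proof. by elim: n => [|n IH]; rewrite ?expr0 // !exprS cstM IH. Qed.
Lemma fc_geo x y m : fc (cst x * (cst y * Xf) ^+ m) m = x * y ^+ m.
Proof.
by rewrite fc_cstM exprMn -cstX fc_cstM -[Xf ^+ m]mulr1 fc_Xn fc1 mulr1.
Qed.
Lemma fc_D1D2 (a k : C) (S : F C) m : fc S 0 = 1 ->
  fc ((cst (2 * k + a) + (cst (- a) * Xf + cst (- a) * S)) * (1 + (Xf + S)) ^+ m) 0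
  = 2 * k * 2 ^+ m.
Proof.
move=> S0; rewrite fcM0 fcX0 !fcD !fc_cstM fc1 S0 /=.
rewrite /fps_X /= mulr0 add0r mulr1 addrK; by rewrite add0r; congr (_ * _ ^+ m).
Qed.
End Conv.

Lemma gen_prop (C : numClosedFieldType) (a : C) (c : int -> C) (m : nat)
  (S : fps C) :
  0 < `|a| < 1 ->
  is_OPUC_functional (fun _ => a) c ->
  (* S = sqrt(1 - 2z + 4|a|^2 z + z^2), the formal power series with constant term 1 *)
  S 0%N = 1 ->
  fps_mul S S =
    (fun n => match n with
              | 0 => 1
              | 1 => -2 + 4 * `|a| ^+ 2
              | 2 => 1
              | _ => 0 end) ->
  (* (sum_n mu_{n,m} z^n) * D1 * D2^m = 2|a|^2 (2z)^m, where
     D1 = 2|a|^2 + a - a z - a S  and  D2 = 1 + z + S;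
     both D1 and D2 have nonzero constant term, so this is the stated quotient. *)
  fps_mul
    (fps_mul (fun n => mu (fun _ => a) c n m)
       (fps_add (fps_const (2 * `|a| ^+ 2 + a))
          (fps_add (fps_scale (- a) (@fps_X C)) (fps_scale (- a) S))))
    (fps_exp (fps_add (fps_const 1) (fps_add (@fps_X C) S)) m)
  = fps_scale (2 * `|a| ^+ 2) (fps_exp (fps_scale 2 (@fps_X C)) m).
Proof.
move=> /andP [a0 a1] Hc S0 HSS.
have Hk2 : `|a| ^+ 2 = a * a^* := normCK a.
set k := a * a^* in Hk2 *.
have FS : FPS S * FPS S = 1 + cst (-2 + 4 * k) * Xf + Xf * Xf.
  apply: F_ext => n; rewrite -[fc (_ * _) n]/(fps_mul S S n) HSS !fcD fc_cstM !fc_XM fc1.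
  by case: n => [|[|[|n]]] /=; rewrite ?Hk2 ?mulr0 ?mulr1 ?addr0 ?add0r.
have FS0 : fc (FPS S) 0 = 1 by [].
have main := @main_alg _ a a^* k (1 - k) (FPS S) (Uf a c) (Vf a c) erefl erefl FS
  (@HU _ a c Hc) (@HV _ a c Hc) (@H0 _ a c) (@HVo _ a c Hc) FS0 m.
have k0 : k != 0 by rewrite /k mul_conjC_eq0 -normr_gt0.
have umm : fc (Uf a c m) m = (1 - k) ^+ m.
  have E := congr1 (fun x => fc x m) main; cbv beta in E.
  rewrite -mulrA (fcM_ordge _ (@HUo _ a c Hc m)) in E.
  rewrite (@fc_D1D2 _ a k (FPS S) m FS0) (@fc_geo _ ((1 - k) ^+ m * (2 * k)) 2 m) in E.
  have t2 : (2 : C) != 0 by rewrite pnatr_eq0.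
  apply: (mulIf (_ : 2 * k * 2 ^+ m != 0)); first by apply: mulf_neq0; [apply: mulf_neq0 | apply: expf_neq0].
  by rewrite E; ring.
have E1 : FPS (fun n => mu (fun _ => a) c n m) = cst (fc (Uf a c m) m)^-1 * Uf a c m.
  by apply: F_ext => n; rewrite fc_cstM /= (mu_E Hc) mulrC.
have rho0 : (1 - k) ^+ m != 0.
  apply: expf_neq0; rewrite subr_eq0; apply/eqP => k1.
  have : `|a| ^+ 2 < 1 by rewrite exprn_ilt1 ?normr_ge0.
  by rewrite Hk2 -k1 ltxx.
apply: FPS_inj.
rewrite !FPS_mul !FPS_exp !FPS_add !FPS_scale !FPS_const FPS_X E1 Hk2 cst1.
rewrite FPS_exp FPS_scale FPS_X.
have -> : forall x y z t : F C, x * y * z * t = x * (y * z * t) by move=> *; ring.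
rewrite main umm mulrA -cstM mulrA mulVf //.
by rewrite mul1r.
Qed.


Theorem proposition4p1 (R : realType) (a : R[i]) (c : int -> R[i]) (m : nat)
  (S : fps R[i]) :
  0 < `|a| < 1 ->
  is_OPUC_functional (fun _ => a) c ->
  (* S = sqrt(1 - 2z + 4|a|^2 z + z^2), the formal power series with constant term 1 *)
  S 0%N = 1 ->
  fps_mul S S =
    (fun n => match n with
              | 0 => 1
              | 1 => -2 + 4 * `|a| ^+ 2
              | 2 => 1
              | _ => 0 end) ->
  (* (sum_n mu_{n,m} z^n) * D1 * D2^m = 2|a|^2 (2z)^m, where
     D1 = 2|a|^2 + a - a z - a S  and  D2 = 1 + z + S;
     both D1 and D2 have nonzero constant term, so this is the stated quotient. *)
  fps_mul
    (fps_mul (fun n => mu (fun _ => a) c n m)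
       (fps_add (fps_const (2 * `|a| ^+ 2 + a))
          (fps_add (fps_scale (- a) (@fps_X R[i])) (fps_scale (- a) S))))
    (fps_exp (fps_add (fps_const 1) (fps_add (@fps_X R[i]) S)) m)
  = fps_scale (2 * `|a| ^+ 2) (fps_exp (fps_scale 2 (@fps_X R[i])) m).
Proof. exact: gen_prop. Qed.
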